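(* Let $\gamma:\pi\to\pi'$ be an arrow of some Rauzy class on the alphabet $\mathcal{A}$. Then $Q_{\pi'}(u)=Q_\pi(u\overline{B}_\gamma)$ for every $u\in(\mathbb{Z}/2\mathbb{Z})^{\mathcal{A}}$.
   Context: Permutations $\pi=(\pi_{\mathrm t},\pi_{\mathrm b})$ are pairs of bijections $\mathcal{A}\to\{1,\dots,d\}$, $d\ge3$, irreducible and nondegenerate; $\alpha_{\varepsilon,j}=\pi_\varepsilon^{-1}(j)$. Rauzy induction: the top operation, with $\alpha_{\mathrm b,k}=\alpha_{\mathrm t,d}$, replaces the bottom row by $\alpha_{\mathrm b,1},\dots,\alpha_{\mathrm b,k},\alpha_{\mathrm b,d},\alpha_{\mathrm b,k+1},\dots,\alpha_{\mathrm b,d-1}$ (winner $\alpha_{\mathrm t,d}$, loser $\alpha_{\mathrm b,d}$); the bottom operation, with $\alpha_{\mathrm t,k}=\alpha_{\mathrm b,d}$, replaces the top row by $\alpha_{\mathrm t,1},\dots,\alpha_{\mathrm t,k},\alpha_{\mathrm t,d},\alpha_{\mathrm t,k+1},\dots,\alpha_{\mathrm t,d-1}$ (winner $\alpha_{\mathrm b,d}$, loser $\alpha_{\mathrm t,d}$). An arrow $\gamma:\pi\to\pi'$ is one such operation, and $B_\gamma=\mathrm{Id}+E_{\alpha_{\mathrm l}\alpha_{\mathrm w}}$ with $\alpha_{\mathrm w},\alpha_{\mathrm l}$ its winner and loser. $(\Omega_\pi)_{\alpha\beta}=+1$ if $\pi_{\mathrm t}(\alpha)<\pi_{\mathrm t}(\beta)$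 and $\pi_{\mathrm b}(\alpha)>\pi_{\mathrm b}(\beta)$, $-1$ if the reverse inequalities hold, $0$ otherwise. A bar denotes reduction mod 2. $Q_\pi(u)=\sum_{\pi_{\mathrm t}(\alpha)<\pi_{\mathrm t}(\beta)}u_\alpha(\Omega_\pi)_{\alpha\beta}u_\beta+\sum_\alpha u_\alpha\bmod 2$ for $u\in(\mathbb{Z}/2\mathbb{Z})^{\mathcal{A}}$; vectors act on matrices from the left (row vectors). *)

(* Defs.v *)
From mathcomp Require Import all_boot all_algebra.
Set Implicit Arguments. Unset Strict Implicit. Unset Printing Implicit Defensive.
Import GRing.Theory.
Local Open Scope ring_scope.

(* A permutation pi = (pi_t, pi_b) on the finite alphabet A is represented by
   the two position maps pi_t, pi_b : A -> nat, each a bijection onto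
   {1, ..., d} with d = #|A|. *)
Definition is_row (A : finType) (p : A -> nat) : Prop :=
  injective p /\ (forall a, (1 <= p a <= #|A|)%N).

Definition irreducible (A : finType) (pt pb : A -> nat) : Prop :=
  forall k : nat, (1 <= k < #|A|)%N ->
    [set a : A | (pt a <= k)%N] <> [set a : A | (pb a <= k)%N].

(* Insertion of the loser l right after the position k = p_w w in row p,
   where p l = d:  alpha_1..alpha_k, alpha_d, alpha_{k+1}, .., alpha_{d-1}. *)
Definition rauzy_row (A : finType) (p : A -> nat) (w l : A) : A -> nat :=
  fun b => if b == l then (p w).+1
           else if (p w < p b)%N then (p b).+1 else p b.

Definition top_arrow (A : finType) (pt pb pt' pb' : A -> nat) (w l : A) : Prop :=
  pt w = #|A| /\ pb l = #|A| /\ pt' = pt /\ pb' = rauzy_row pb w l.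

Definition bot_arrow (A : finType) (pt pb pt' pb' : A -> nat) (w l : A) : Prop :=
  pb w = #|A| /\ pt l = #|A| /\ pb' = pb /\ pt' = rauzy_row pt w l.

Definition rauzy_arrow (A : finType) (pt pb pt' pb' : A -> nat) (w l : A) : Prop :=
  top_arrow pt pb pt' pb' w l \/ bot_arrow pt pb pt' pb' w l.

Definition Bmat (A : finType) (w l : A) (a b : A) : int :=
  ((a == b)%:R + ((a == l) && (b == w))%:R)%R.

Definition bar (z : int) : 'F_2 := z%:~R.

Definition vmul (A : finType) (u : A -> 'F_2) (M : A -> A -> 'F_2) : A -> 'F_2 :=
  fun b => \sum_(a : A) u a * M a b.

Definition Omega (A : finType) (pt pb : A -> nat) (a b : A) : int :=
  if (pt a < pt b)%N && (pb a > pb b)%N then 1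
  else if (pt a > pt b)%N && (pb a < pb b)%N then -1 else 0.

Definition Qform (A : finType) (pt pb : A -> nat) (u : A -> 'F_2) : 'F_2 :=
  \sum_(a : A) \sum_(b : A | (pt a < pt b)%N) u a * bar (Omega pt pb a b) * u b
  + \sum_(a : A) u a.

(* Main.v *)
Require Import Defs.
From mathcomp Require Import all_boot all_algebra.
From mathcomp Require Import zify ring.
Local Open Scope ring_scope.
Import GRing.Theory.
Set Implicit Arguments. Unset Strict Implicit.

Lemma F2c (x : 'F_2) : x = 0 \/ x = 1.
Proof. case: x => [[|[|n]]] H; [left|right|by []]; by apply/val_inj. Qed.

Definition S (A : finType) (pt pb : A -> nat) (u : A -> 'F_2) : 'F_2 :=
  \sum_(a : A) \sum_(b : A) ((pt a < pt b)%N && (pb b < pb a)%N)%:R * u a * u b.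

Lemma QformE (A : finType) (pt pb : A -> nat) u :
  Qform pt pb u = S pt pb u + \sum_a u a.
Proof.
rewrite /Qform /S; congr (_ + _); apply eq_bigr => a _.
rewrite big_mkcond; apply eq_bigr => b _ /=.
case: (ltnP (pt a) (pt b)) => h /=.
  rewrite /Omega h /=; case: (ltnP (pb b) (pb a)) => h2 /=.
    by rewrite /bar mulr1z mulr1 mul1r.
  by rewrite ltnNge (ltnW h) /= /bar mulr0z !mulr0 !mul0r.
by rewrite !mul0r.
Qed.

Lemma Ssym (A : finType) (pt pb : A -> nat) u : S pt pb u = S pb pt u.
Proof.
rewrite /S exchange_big; apply eq_bigr => a _; apply eq_bigr => b _.
by rewrite andbC mulrAC.
Qed.

Lemma sum3 (T : finType) (R : zmodType) (l w : T) (g : T -> R) : l != w ->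
  \sum_a g a = g l + g w + \sum_(a | (a != l) && (a != w)) g a.
Proof.
move=> lw; rewrite (bigD1 l) //= (bigD1 w) /=; last by rewrite eq_sym.
by rewrite addrA.
Qed.

Lemma decomp (T : finType) (l w : T) (h : T -> T -> 'F_2) : l != w ->
  \sum_a \sum_b h a b = (h l l + h l w + h w l + h w w)
  + \sum_(x | (x != l) && (x != w)) (h l x + h w x + h x l + h x w)
  + \sum_(a | (a != l) && (a != w)) \sum_(b | (b != l) && (b != w)) h a b.
Proof.
move=> lw.
rewrite (eq_bigr (fun a => h a l + h a w + \sum_(b | (b != l) && (b != w)) h a b));
  last by move=> a _; rewrite (sum3 _ lw).
rewrite (sum3 _ lw) !big_split /=.
set X := \sum_(i | _) \sum_(j | _) _.
set Y1 := \sum_(i | _) h i l; set Y2 := \sum_(i | _) h i w.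
set Z1 := \sum_(i | _) h l i; set Z2 := \sum_(i | _) h w i.
ring.
Qed.

Lemma barb (x y : bool) : bar (x%:R + y%:R) = (x%:R + y%:R : 'F_2).
Proof. by case: x; case: y; apply/val_inj; vm_compute. Qed.

Lemma vmulE (A : finType) (w l : A) (u : A -> 'F_2) b :
  vmul u (fun a b => bar (Bmat w l a b)) b = u b + (b == w)%:R * u l.
Proof.
rewrite /vmul /Bmat.
under eq_bigr => a _ do rewrite barb mulrDr.
rewrite big_split /=; congr (_ + _).
  rewrite (bigD1 b) //= eqxx mulr1 big1 ?addr0 // => a /negbTE ->; by rewrite mulr0.
rewrite (bigD1 l) //= eqxx /= big1 ?addr0; first by case: (b == w); rewrite ?mulr1 ?mul1r ?mulr0 ?mul0r.
by move=> a /negbTE ->; rewrite mulr0.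
Qed.

Ltac fixbools :=
  repeat match goal with
  | |- context [leq ?m ?n] =>
      (have -> : leq m n = true by lia) || (have -> : leq m n = false by apply/negbTE; lia)
  end.

Ltac f2done := repeat match goal with
  | |- context [?u ?a] => match type of (u a) with 'F_2 =>
       let e := fresh in set e := u a; case: (F2c e) => ->; clear e end end;
  apply/val_inj; vm_compute; reflexivity.

Lemma core (A : finType) (pt pb : A -> nat) (w l : A) (u : A -> 'F_2) :
  injective pt -> injective pb -> (forall a, pt a <= #|A|)%N -> (forall a, pb a <= #|A|)%N ->
  pt w = #|A| -> pb l = #|A| -> w != l ->
  S pt (rauzy_row pb w l) u + \sum_a u a =
  S pt pb (fun b => u b + (b == w)%:R * u l) + \sum_a (u a + (a == w)%:R * u l).
Proof.
move=> ipt ipb hpt hpb ptw pbl wl.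
set v := fun b => u b + (b == w)%:R * u l.
have sv : \sum_a v a = \sum_a u a + u l.
  rewrite /v big_split /=; congr (_ + _).
  rewrite (bigD1 w) //= eqxx mul1r big1 ?addr0 // => b /negbTE ->; by rewrite mul0r.
rewrite sv addrA; suff -> : S pt (rauzy_row pb w l) u = S pt pb v + u l by rewrite addrAC.
apply/eqP; rewrite addrC -subr_eq; apply/eqP.
rewrite /S -sumrB; under eq_bigr => a _ do rewrite -sumrB.
have lw : l != w by rewrite eq_sym.
rewrite (decomp _ lw).
have vl : v l = u l by rewrite /v (negbTE lw) mul0r addr0.
have vw : v w = u w + u l by rewrite /v eqxx mul1r.
have vx : forall x, x != w -> v x = u x by move=> x /negbTE xw; rewrite /v xw mul0r addr0.
have pb'l : rauzy_row pb w l l = (pb w).+1 by rewrite /rauzy_row eqxx.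
have pb'x : forall x, x != l -> rauzy_row pb w l x = if (pb w < pb x)%N then (pb x).+1 else pb x.
  by move=> x /negbTE xl; rewrite /rauzy_row xl.
have ltpt : forall x, x != w -> (pt x < #|A|)%N.
  move=> x xw; rewrite ltn_neqAle hpt andbT -ptw; apply: contra xw => /eqP /ipt ->; by [].
have ltpb : forall x, x != l -> (pb x < #|A|)%N.
  move=> x xl; rewrite ltn_neqAle hpb andbT -pbl; apply: contra xl => /eqP /ipb ->; by [].
have ptl := ltpt l lw. have pbw := ltpb w wl.
rewrite (pb'x w wl).
have -> : \sum_(a | (a != l) && (a != w)) \sum_(b | (b != l) && (b != w))
   (((pt a < pt b)%N && (rauzy_row pb w l b < rauzy_row pb w l a)%N)%:R * u a * u b -
    ((pt a < pt b)%N && (pb b < pb a)%N)%:R * v a * v b) = 0.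
  apply: big1 => a /andP [al aw]; apply: big1 => b /andP [bl bw].
  rewrite (vx a aw) (vx b bw) (pb'x a al) (pb'x b bl).
  suff -> : ((if (pb w < pb b)%N then (pb b).+1 else pb b) < (if (pb w < pb a)%N then (pb a).+1 else pb a))%N = (pb b < pb a)%N by rewrite subrr.
  by case: (ltnP (pb w) (pb b)) => h1; case: (ltnP (pb w) (pb a)) => h2; apply/idP/idP => h3; lia.
rewrite addr0 big1 ?addr0; last first.
  move=> x /andP [xl xw].
  rewrite vl vw (vx x xw) pb'l (pb'x x xl) pbl ptw.
  have ptx := ltpt x xw. have pbx := ltpb x xl.
  have ptxl : pt x != pt l by apply: contra xl => /eqP /ipt ->.
  have pbxw : pb x != pb w by apply: contra xw => /eqP /ipb ->.
  case: (ltnP (pt l) (pt x)) => h1; case: (ltnP (pb w) (pb x)) => h2; fixbools; rewrite /=; f2done.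
rewrite vl vw pb'l pbl ptw.
fixbools; rewrite /=; f2done.
Qed.


Lemma S_ext (A : finType) (pt pb : A -> nat) (f g : A -> 'F_2) : f =1 g ->
  S pt pb f = S pt pb g.
Proof. by move=> fg; apply eq_bigr => a _; apply eq_bigr => b _; rewrite !fg. Qed.

Lemma wl_neq (A : finType) (pt pb : A -> nat) (w : A) : (3 <= #|A|)%N ->
  is_row pt -> is_row pb -> irreducible pt pb -> pt w = #|A| -> pb w = #|A| -> False.
Proof.
move=> d3 [ipt hpt] [ipb hpb] irr ptw pbw.
apply: (irr (#|A|.-1)); first by apply/andP; split; lia.
apply/setP => a; rewrite !inE.
case: (eqVneq a w) => [->|aw]; first by rewrite ptw pbw; apply/idP/idP; lia.
have h1 : pt a != #|A| by rewrite -ptw; apply: contra aw => /eqP /ipt ->.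
have h2 : pb a != #|A| by rewrite -pbw; apply: contra aw => /eqP /ipb ->.
move: (hpt a) (hpb a) => /andP [? ?] /andP [? ?].
by apply/idP/idP => _; lia.
Qed.

Theorem lemma2p11 (A : finType) (pt pb pt' pb' : A -> nat) (w l : A) :
  (3 <= #|A|)%N ->
  is_row pt -> is_row pb -> irreducible pt pb ->
  rauzy_arrow pt pb pt' pb' w l ->
  forall u : A -> 'F_2,
    Qform pt' pb' u = Qform pt pb (vmul u (fun a b => bar (Bmat w l a b))).
Proof.
move=> d3 rpt rpb irr arr u.
have rpt' := rpt; have rpb' := rpb.
case: rpt' => ipt hpt; case: rpb' => ipb hpb.
have hpt' : forall a, (pt a <= #|A|)%N by move=> a; case/andP: (hpt a).
have hpb' : forall a, (pb a <= #|A|)%N by move=> a; case/andP: (hpb a).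
rewrite !QformE (S_ext _ _ (vmulE w l u)) (eq_bigr _ (fun a _ => vmulE w l u a)).
case: arr => [[ptw [pbl [-> ->]]] | [pbw [ptl [-> ->]]]].
  have wl : w != l by apply/eqP => e; subst; exact: (wl_neq d3 rpt rpb irr ptw pbl).
  exact: core.
have wl : w != l by apply/eqP => e; subst; exact: (wl_neq d3 rpt rpb irr ptl pbw).
rewrite Ssym [S pt pb _]Ssym.
exact: core.
Qed.
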